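(* For $n\ge2$ let $c=c(n)>0$ be the unique value with $\Pr_{\mathbf{g}\sim N(0,1)}[|\mathbf{g}|\le c]=(1/2)^{1/n}$, and let $K=[-c,c]^n\subseteq\mathbb{R}^n$ (so $\mathrm{vol}(K)=1/2$), viewed as $K:\mathbb{R}^n\to\{-1,1\}$. Then $\mathsf{W}^{\le2}[K]=O\big(\tfrac{\log^2 n}{n}\big)$.
   Context: $\mathrm{vol}(K)=\Pr_{\mathbf{g}\sim N(0,I_n)}[\mathbf{g}\in K]$. $K(x)=1$ if $x\in K$ and $-1$ otherwise. For $S\in\mathbb{N}^n$, $H_S(x)=\prod_i h_{S_i}(x_i)$ with $h_j$ the normalized univariate Hermite polynomials; $\tilde f(S)=\mathbf{E}_{\mathbf{g}\sim N(0,I_n)}[f(\mathbf{g})H_S(\mathbf{g})]$, $|S|=\sum_iS_i$, and $\mathsf{W}^{\le2}[f]=\sum_{|S|\le2}\tilde f(S)^2$. The $O(\cdot)$ hides an absolute constant. *)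

(* Defs.v *)
From Stdlib Require Import Reals Lra Lia Factorial.
Open Scope R_scope.

Definition gauss_pdf (t : R) : R := exp (- (t ^ 2) / 2) / sqrt (2 * PI).

Definition improper_int (f : R -> R) (l : R) : Prop :=
  forall eps : R, 0 < eps -> exists M : R, 0 < M /\
    forall a b : R, a <= - M -> M <= b ->
      exists pr : Riemann_integrable f a b, Rabs (RiemannInt pr - l) < eps.

(* Points of R^n are represented as x : nat -> R, coordinates 0..n-1. *)
Definition upd (x : nat -> R) (i : nat) (t : R) : nat -> R :=
  fun j => if Nat.eqb j i then t else x j.

(* gexp n F v : E_{g ~ N(0, I_n)} [F g] = v, as an iterated (improper,
   Riemann) Gaussian integral over coordinates 0..n-1. *)
Fixpoint gexp (n : nat) (F : (nat -> R) -> R) (v : R) : Prop :=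
  match n with
  | O => v = F (fun _ => 0)
  | S m => exists G : R -> R,
      (forall t : R, gexp m (fun x => F (upd x m t)) (G t)) /\
      improper_int (fun t => G t * gauss_pdf t) v
  end.

(* Probabilists' Hermite polynomials He_j and normalized h_j = He_j / sqrt(j!). *)
Fixpoint He2 (j : nat) (x : R) : R * R :=  (* (He_j x, He_{j+1} x) *)
  match j with
  | O => (1, x)
  | S k => let (a, b) := He2 k x in (b, x * b - INR (S k) * a)
  end.
Definition He (j : nat) (x : R) : R := fst (He2 j x).
Definition hnorm (j : nat) (x : R) : R := He j x / sqrt (INR (fact j)).

Fixpoint HS (n : nat) (S : nat -> nat) (x : nat -> R) : R :=
  match n with
  | O => 1
  | Datatypes.S m => HS m S x * hnorm (S m) (x m)
  end.

(* Sum of F S over multi-indices S in N^n (S i = 0 for i >= n) with |S| <= k. *)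
Fixpoint sum_multi (n k : nat) (F : (nat -> nat) -> R) : R :=
  match n with
  | O => F (fun _ => O)
  | S m => sum_f_R0 (fun j =>
             sum_multi m (k - j) (fun T => F (fun i => if Nat.eqb i m then j else T i))) k
  end.

Fixpoint in_cube (n : nat) (c : R) (x : nat -> R) : bool :=
  match n with
  | O => true
  | S m => in_cube m c x && (if Rle_dec (Rabs (x m)) c then true else false)
  end.
Definition cubeK (n : nat) (c : R) (x : nat -> R) : R :=
  if in_cube n c x then 1 else -1.

Definition prob_abs_le (c p : R) : Prop :=
  exists pr : Riemann_integrable gauss_pdf (- c) c, RiemannInt pr = p.

(* Main.v *)
Require Import Defs.
From Stdlib Require Import Reals Lra Lia.
From Coquelicot Require Import Coquelicot.
Open Scope R_scope.

Lemma sq2pi_pos : 0 < sqrt (2 * PI).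
Proof. apply sqrt_lt_R0. generalize PI_RGT_0; lra. Qed.

Lemma phi_pos t : 0 < gauss_pdf t.
Proof. unfold gauss_pdf. apply Rdiv_lt_0_compat. apply exp_pos. apply sq2pi_pos. Qed.

Lemma phi_even t : gauss_pdf (- t) = gauss_pdf t.
Proof. unfold gauss_pdf. f_equal. f_equal. f_equal. ring. Qed.

Lemma phi_der t : is_derive gauss_pdf t (- t * gauss_pdf t).
Proof. unfold gauss_pdf. auto_derive; auto.
  assert (E: - t ^ 2 / 2 = - (t * (t * 1)) * / 2) by (simpl; field). rewrite E.
  field. generalize sq2pi_pos; lra. Qed.

Lemma phi_cont t : continuous gauss_pdf t.
Proof. exact (ex_derive_continuous gauss_pdf t (ex_intro _ _ (phi_der t))). Qed.

Lemma anti1 t : is_derive (fun t => - gauss_pdf t) t (t * gauss_pdf t).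
Proof. unfold gauss_pdf. auto_derive; auto.
  assert (E: - t ^ 2 / 2 = - (t * (t * 1)) * / 2) by (simpl; field). rewrite E.
  field. generalize sq2pi_pos; lra. Qed.

Lemma anti2 t : is_derive (fun t => - t * gauss_pdf t) t ((t * t - 1) * gauss_pdf t).
Proof. unfold gauss_pdf. auto_derive; auto.
  assert (E: - t ^ 2 / 2 = - (t * (t * 1)) * / 2) by (simpl; field). rewrite E.
  field. generalize sq2pi_pos; lra. Qed.

Lemma cont_mul_phi (f : R -> R) t : continuous f t -> continuous (fun t => f t * gauss_pdf t) t.
Proof. intro H. exact (continuous_mult f gauss_pdf t H (phi_cont t)). Qed.

Lemma iR_lin (f g : R -> R) a b If Ig al be : is_RInt f a b If -> is_RInt g a b Ig ->
  is_RInt (fun t => al * f t + be * g t) a b (al*If + be*Ig).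
Proof. intros Hf Hg.
  exact (is_RInt_plus (fun t => al * f t) (fun t => be * g t) a b _ _
    (is_RInt_scal f a b al If Hf) (is_RInt_scal g a b be Ig Hg)). Qed.

Lemma iR_ext (f g : R -> R) a b l : (forall x, Rmin a b < x < Rmax a b -> f x = g x) ->
  is_RInt f a b l -> is_RInt g a b l.
Proof. intros H1 H2. exact (is_RInt_ext f g a b l H1 H2). Qed.

Lemma iR_unique (f : R -> R) a b l : is_RInt f a b l -> RInt f a b = l.
Proof. intro H. exact (is_RInt_unique f a b l H). Qed.

Lemma iR_chasles (f : R -> R) a b c l1 l2 : is_RInt f a b l1 -> is_RInt f b c l2 -> is_RInt f a c (l1 + l2).
Proof. intros H1 H2. exact (is_RInt_Chasles f a b c l1 l2 H1 H2). Qed.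

Lemma iR_const a b (v : R) : is_RInt (fun _ => v) a b ((b - a) * v).
Proof. exact (is_RInt_const a b v). Qed.

Lemma iR_der (F f : R -> R) a b : (forall x, is_derive F x (f x)) -> (forall x, continuous f x) ->
  is_RInt f a b (F b - F a).
Proof. intros H1 H2. exact (is_RInt_derive F f a b (fun x _ => H1 x) (fun x _ => H2 x)). Qed.

Lemma iR_le (f g : R -> R) a b If Ig : a <= b -> is_RInt f a b If -> is_RInt g a b Ig ->
  (forall x, a < x < b -> f x <= g x) -> If <= Ig.
Proof. intros. eapply is_RInt_le; eauto. Qed.

Lemma iR_cont (f : R -> R) a b : (forall x, continuous f x) -> is_RInt f a b (RInt f a b).
Proof. intro H. exact (RInt_correct f a b (ex_RInt_continuous f a b (fun z _ => H z))). Qed.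

Lemma imp_of (f : R -> R) l : (forall eps, 0 < eps -> exists M, forall a b, a <= -M -> M <= b ->
   exists v, is_RInt f a b v /\ Rabs (v - l) < eps) -> improper_int f l.
Proof.
  intros H eps He. destruct (H eps He) as [M HM]. exists (Rmax M 1). split.
  - generalize (Rmax_r M 1); lra.
  - intros a b Ha Hb. destruct (HM a b) as [v [Hv Hl]].
    + generalize (Rmax_l M 1); lra.
    + generalize (Rmax_l M 1); lra.
    + exists (ex_RInt_Reals_0 f a b (ex_intro _ v Hv)). rewrite <- RInt_Reals.
      rewrite (iR_unique f a b v Hv). exact Hl.
Qed.

Lemma imp_to (f : R -> R) l : improper_int f l -> forall eps, 0 < eps -> exists M, 0 < M /\
  forall a b, a <= -M -> M <= b -> is_RInt f a b (RInt f a b) /\ Rabs (RInt f a b - l) < eps.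
Proof.
  intros H eps He. destruct (H eps He) as [M [HM0 HM]]. exists M. split; auto.
  intros a b Ha Hb. destruct (HM a b Ha Hb) as [pr Hp]. split.
  - exact (RInt_correct f a b (ex_RInt_Reals_1 f a b pr)).
  - rewrite (RInt_Reals f a b pr). exact Hp.
Qed.

Lemma imp_ext (f g : R -> R) l : (forall t, f t = g t) -> improper_int f l -> improper_int g l.
Proof.
  intros E H. apply imp_of. intros eps He. destruct (imp_to f l H eps He) as [M [_ HM]].
  exists M. intros a b Ha Hb. destruct (HM a b Ha Hb) as [H1 H2].
  exists (RInt f a b). split; auto. apply (iR_ext f g); auto.
Qed.

Lemma imp_lin (u w : R -> R) U W al be :
  improper_int (fun t => u t * gauss_pdf t) U -> improper_int (fun t => w t * gauss_pdf t) W ->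
  improper_int (fun t => (al * u t + be * w t) * gauss_pdf t) (al * U + be * W).
Proof.
  intros Hu Hw. apply imp_of. intros eps He.
  set (e' := eps / (Rabs al + Rabs be + 1)).
  assert (Hd : 0 < Rabs al + Rabs be + 1) by (generalize (Rabs_pos al) (Rabs_pos be); lra).
  assert (He' : 0 < e') by (unfold e'; apply Rdiv_lt_0_compat; lra).
  destruct (imp_to _ _ Hu e' He') as [M1 [_ H1]].
  destruct (imp_to _ _ Hw e' He') as [M2 [_ H2]].
  exists (Rmax M1 M2). intros a b Ha Hb.
  destruct (H1 a b) as [I1 B1]; [generalize (Rmax_l M1 M2); lra | generalize (Rmax_l M1 M2); lra |].
  destruct (H2 a b) as [I2 B2]; [generalize (Rmax_r M1 M2); lra | generalize (Rmax_r M1 M2); lra |].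
  eexists. split.
  - eapply iR_ext. 2: exact (iR_lin _ _ a b _ _ al be I1 I2). intros x _. simpl. ring.
  - set (X := RInt (fun t : R => u t * gauss_pdf t) a b) in *.
    set (Y := RInt (fun t : R => w t * gauss_pdf t) a b) in *.
    replace (al * X + be * Y - (al * U + be * W)) with (al * (X - U) + be * (Y - W)) by ring.
    eapply Rle_lt_trans. apply Rabs_triang. rewrite !Rabs_mult.
    assert (Rabs al * Rabs (X - U) <= Rabs al * e') by (apply Rmult_le_compat_l; [apply Rabs_pos|lra]).
    assert (Rabs be * Rabs (Y - W) <= Rabs be * e') by (apply Rmult_le_compat_l; [apply Rabs_pos|lra]).
    assert (E: (Rabs al + Rabs be + 1) * e' = eps) by (unfold e'; field; lra).
    nra.
Qed.

Fixpoint prodf (n : nat) (u : nat -> R -> R) (x : nat -> R) : R :=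
  match n with O => 1 | S m => prodf m u x * u m (x m) end.
Fixpoint prodr (n : nat) (U : nat -> R) : R :=
  match n with O => 1 | S m => prodr m U * U m end.

Lemma prodf_ext n u x y : (forall i, (i < n)%nat -> x i = y i) -> prodf n u x = prodf n u y.
Proof. induction n; simpl; intros H; auto. rewrite IHn by (intros; apply H; lia). rewrite H by lia. auto. Qed.

Lemma upd_lt x m t i : (i < m)%nat -> upd x m t i = x i.
Proof. intros. unfold upd. destruct (Nat.eqb_spec i m); auto; lia. Qed.

Lemma upd_eq x m t : upd x m t m = t.
Proof. unfold upd. rewrite Nat.eqb_refl. auto. Qed.

Lemma gexp_ext n : forall F F' v, (forall x, F x = F' x) -> gexp n F v -> gexp n F' v.
Proof.
  induction n; simpl; intros F F' v E H.
  - rewrite H; auto.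
  - destruct H as [G [H1 H2]]. exists G. split; auto.
    intro t. apply (IHn (fun x => F (upd x n t))); auto.
Qed.

Lemma gexp_prod n : forall (u w : nat -> R -> R) (U W : nat -> R),
  (forall i, (i < n)%nat -> improper_int (fun t => u i t * gauss_pdf t) (U i) /\
                            improper_int (fun t => w i t * gauss_pdf t) (W i)) ->
  forall A B, gexp n (fun x => A * prodf n u x + B * prodf n w x) (A * prodr n U + B * prodr n W).
Proof.
  induction n; intros u w U W H A B; simpl.
  - reflexivity.
  - exists (fun t => (A * prodr n U) * u n t + (B * prodr n W) * w n t). split.
    + intro t. replace (A * prodr n U * u n t + B * prodr n W * w n t) with
        (A * u n t * prodr n U + B * w n t * prodr n W) by ring. eapply gexp_ext.
      2: apply (IHn u w U W (fun i Hi => H i ltac:(lia)) (A * u n t) (B * w n t)).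
      intro x. simpl. rewrite upd_eq.
      rewrite (prodf_ext n u (upd x n t) x) by (intros; apply upd_lt; auto).
      rewrite (prodf_ext n w (upd x n t) x) by (intros; apply upd_lt; auto).
      ring.
    + destruct (H n ltac:(lia)) as [H1 H2].
      replace (A * (prodr n U * U n) + B * (prodr n W * W n)) with
        (A * prodr n U * U n + B * prodr n W * W n) by ring.
      eapply imp_ext. 2: exact (imp_lin _ _ _ _ (A * prodr n U) (B * prodr n W) H1 H2).
      intro t; simpl. auto.
Qed.

Lemma sum_multi_ext n : forall k F F', (forall S, F S = F' S) -> sum_multi n k F = sum_multi n k F'.
Proof.
  induction n; simpl; intros k F F' H; auto.
  apply sum_eq. intros j _. apply IHn. intro S. apply H.
Qed.

Lemma sum_lin2 (x y : nat -> R) a b k :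
  sum_f_R0 (fun j => a * x j + b * y j) k = a * sum_f_R0 x k + b * sum_f_R0 y k.
Proof. induction k; simpl; [ring | rewrite IHk; ring]. Qed.

Lemma sum_multi_lin n : forall k F G a b,
  sum_multi n k (fun S => a * F S + b * G S) = a * sum_multi n k F + b * sum_multi n k G.
Proof.
  induction n; simpl; intros; auto.
  rewrite <- sum_lin2. apply sum_eq. intros j _. apply IHn.
Qed.

Lemma prodr_ext n U V : (forall i, (i < n)%nat -> U i = V i) -> prodr n U = prodr n V.
Proof. induction n; simpl; intros H; auto. rewrite IHn by (intros; apply H; lia). rewrite H by lia. auto. Qed.

Lemma prodr_mult n U V : prodr n U * prodr n V = prodr n (fun i => U i * V i).
Proof. induction n; simpl; [ring | rewrite <- IHn; ring]. Qed.

Fixpoint Wf (w : nat -> R) (m k : nat) : R :=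
  match m with O => 1 | S m' => sum_f_R0 (fun j => w j * Wf w m' (k - j)) k end.

Lemma scal_sum' (x : nat -> R) c k : c * sum_f_R0 x k = sum_f_R0 (fun j => c * x j) k.
Proof. induction k; simpl; [ring | rewrite <- IHk; ring]. Qed.

Lemma sum_multi_prod (w : nat -> R) m : forall k c0,
  sum_multi m k (fun S => c0 * prodr m (fun i => w (S i))) = c0 * Wf w m k.
Proof.
  induction m; simpl; intros k c0; [ring|].
  rewrite scal_sum'. apply sum_eq. intros j _.
  rewrite (sum_multi_ext m (k - j) _ (fun T => (c0 * w j) * prodr m (fun i => w (T i)))).
  - rewrite IHm. ring.
  - intro T. rewrite Nat.eqb_refl.
    rewrite (prodr_ext m (fun i => w (if Nat.eqb i m then j else T i)) (fun i => w (T i))).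
    + ring.
    + intros i Hi. destruct (Nat.eqb_spec i m); [lia | auto].
Qed.

Lemma Wf0 w m : Wf w m 0 = w 0%nat ^ m.
Proof. induction m; simpl; auto. rewrite IHm. ring. Qed.

Lemma Wf2 w m : w 1%nat = 0 -> Wf w m 2 = w 0%nat ^ m + INR m * w 2%nat * w 0%nat ^ (pred m).
Proof.
  intro H1. induction m.
  - simpl. ring.
  - change (Wf w (S m) 2) with (w 0%nat * Wf w m 2 + w 1%nat * Wf w m 1 + w 2%nat * Wf w m 0).
    rewrite IHm, Wf0, H1. rewrite S_INR. destruct m.
    + simpl. ring.
    + simpl pred. simpl. ring.
Qed.

Definition Ec (p a2 : R) (j : nat) : R := match j with O => p | 1%nat => 0 | _ => a2 end.
Definition E0 (j : nat) : R := match j with O => 1 | _ => 0 end.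

Lemma sum_final n p a2 : p ^ n = 1/2 ->
  sum_multi n 2 (fun S => (2 * prodr n (fun i => Ec p a2 (S i)) - prodr n (fun i => E0 (S i))) ^ 2)
  = 4 * INR n * a2 ^ 2 * (p ^ 2) ^ (pred n).
Proof.
  intro Hp.
  rewrite (sum_multi_ext n 2 _ (fun S => 4 * (1 * prodr n (fun i => (fun j => Ec p a2 j ^ 2) (S i)))
     + 1 * ((-4) * prodr n (fun i => (fun j => Ec p a2 j * E0 j) (S i)) + 1 * (1 * prodr n (fun i => (fun j => E0 j ^ 2) (S i)))))).
  2:{ intro S. rewrite <- !prodr_mult.
      replace (prodr n (fun i : nat => Ec p a2 (S i) ^ 2)) with
        (prodr n (fun i : nat => Ec p a2 (S i)) * prodr n (fun i : nat => Ec p a2 (S i))).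
      replace (prodr n (fun i : nat => E0 (S i) ^ 2)) with
        (prodr n (fun i : nat => E0 (S i)) * prodr n (fun i : nat => E0 (S i))).
      ring.
      all: rewrite prodr_mult; apply prodr_ext; intros; simpl; rewrite Rmult_1_r; reflexivity. }
  rewrite sum_multi_lin, sum_multi_lin.
  assert (A1 := sum_multi_prod (fun j => Ec p a2 j ^ 2) n 2 1).
  assert (A2 := sum_multi_prod (fun j => Ec p a2 j * E0 j) n 2 1).
  assert (A3 := sum_multi_prod (fun j => E0 j ^ 2) n 2 1).
  rewrite (sum_multi_ext n 2 (fun S => prodr n (fun i => Ec p a2 (S i) * E0 (S i)))
     (fun S => 1 * prodr n (fun i => (fun j => Ec p a2 j * E0 j) (S i)))) by (intro; ring).
  cbv beta in A1, A2, A3. rewrite A1, A2, A3.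
  rewrite !Wf2 by (simpl; ring).
  simpl Ec; simpl E0.
  rewrite pow1.
  replace ((p ^ 2) ^ n) with ((p ^ n) ^ 2) by (rewrite <- !pow_mult; f_equal; lia).
  replace ((p * 1) ^ n) with (p ^ n) by (f_equal; ring).
  rewrite Hp, (pow1 n). generalize ((p ^ 2) ^ Init.Nat.pred n) ((p * 1) ^ Init.Nat.pred n) (1 ^ Init.Nat.pred n). intros. field.
Qed.

Lemma cont_of_ex (f : R -> R) t : ex_derive f t -> continuous f t.
Proof. intro H. exact (ex_derive_continuous f t H). Qed.

Lemma iR_val (f : R -> R) a b l l' : is_RInt f a b l -> l = l' -> is_RInt f a b l'.
Proof. intros H E; subst; auto. Qed.

Lemma hn0 t : hnorm 0 t = 1.
Proof. unfold hnorm, He. simpl. rewrite sqrt_1. field. Qed.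
Lemma hn1 t : hnorm 1 t = t.
Proof. unfold hnorm, He. simpl. rewrite sqrt_1. field. Qed.
Lemma hn2 t : hnorm 2 t = (t * t - 1) / sqrt 2.
Proof. unfold hnorm, He. simpl. replace (1+1) with 2 by ring. f_equal. ring. Qed.

Lemma sqrt2pi_ge1 : 1 <= sqrt (2 * PI).
Proof. rewrite <- sqrt_1. apply sqrt_le_1_alt. generalize PI_RGT_0 PI_4 (PI2_1); lra. Qed.

Lemma phi_bd x : x * x * gauss_pdf x <= 2.
Proof.
  unfold gauss_pdf.
  assert (H := exp_ineq1_le (x ^ 2 / 2)).
  assert (E : exp (- x ^ 2 / 2) * exp (x ^ 2 / 2) = 1).
  { rewrite <- exp_plus. replace (- x ^ 2 / 2 + x ^ 2 / 2) with 0 by field. apply exp_0. }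
  assert (P := exp_pos (- x ^ 2 / 2)). generalize sqrt2pi_ge1; intro S.
  assert (x * x * exp (- x ^ 2 / 2) <= 2).
  { assert (x*x <= 2 * exp (x^2/2)) by (simpl in H |- *; nra). nra. }
  apply Rle_trans with (x * x * exp (- x ^ 2 / 2)); [|auto].
  unfold Rdiv. rewrite <- Rmult_assoc. rewrite <- (Rmult_1_r (x * x * exp (- x ^ 2 / 2))) at 2.
  apply Rmult_le_compat_l. assert (0 <= x*x) by nra. nra.
  rewrite <- Rinv_1. apply Rinv_le_contravar; lra.
Qed.

Lemma tail_small eps : 0 < eps -> exists M, 1 <= M /\ forall x, M <= Rabs x ->
  gauss_pdf x < eps /\ Rabs x * gauss_pdf x < eps.
Proof.
  intro He. exists (Rmax 1 (4 / eps)). split. apply Rmax_l.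
  intros x Hx. assert (H1 := Rmax_l 1 (4/eps)). assert (H2 := Rmax_r 1 (4/eps)).
  assert (Ha : 1 <= Rabs x) by lra. assert (Hb : 4 / eps <= Rabs x) by lra.
  assert (B := phi_bd x). assert (P := phi_pos x).
  assert (E : x * x = Rabs x * Rabs x) by (rewrite <- Rabs_mult; rewrite Rabs_right; nra).
  rewrite E in B.
  assert (Hc : 4 <= eps * Rabs x).
  { apply (Rmult_le_compat_l eps) in Hb; [|lra]. unfold Rdiv in Hb. 
    replace (eps * (4 * / eps)) with 4 in Hb by (field; lra). lra. }
  split; nra.
Qed.

Definition chi (c t : R) : R := if Rle_dec (Rabs t) c then 1 else 0.

Lemma trunc (g : R -> R) c a b I : 0 < c -> a <= -c -> c <= b ->
  is_RInt g (-c) c I -> is_RInt (fun t => chi c t * g t) a b I.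
Proof.
  intros Hc Ha Hb H.
  replace I with ((0 + I) + 0) by ring.
  apply iR_chasles with c. apply iR_chasles with (-c).
  - replace 0 with ((-c - a) * 0) at 1 by ring.
    eapply iR_ext. 2: apply iR_const. intros x Hx.
    rewrite Rmin_left in Hx by lra. rewrite Rmax_right in Hx by lra.
    unfold chi. destruct (Rle_dec (Rabs x) c) as [h|h]; [|ring].
    exfalso. apply Rabs_le_between in h. lra.
  - eapply iR_ext. 2: exact H. intros x Hx.
    rewrite Rmin_left in Hx by lra. rewrite Rmax_right in Hx by lra.
    unfold chi. destruct (Rle_dec (Rabs x) c) as [h|h]; [ring|].
    exfalso. apply h. apply Rabs_le_between. lra.
  - replace 0 with ((b - c) * 0) at 1 by ring.
    eapply iR_ext. 2: apply iR_const. intros x Hx.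
    rewrite Rmin_left in Hx by lra. rewrite Rmax_right in Hx by lra.
    unfold chi. destruct (Rle_dec (Rabs x) c) as [h|h]; [|ring].
    exfalso. apply Rabs_le_between in h. lra.
Qed.

Lemma cont1 t : continuous (fun t => t * gauss_pdf t) t.
Proof. apply cont_of_ex. unfold gauss_pdf. auto_derive. auto. Qed.
Lemma cont2 t : continuous (fun t => (t * t - 1) * gauss_pdf t) t.
Proof. apply cont_of_ex. unfold gauss_pdf. auto_derive. auto. Qed.

Lemma iR1 a b : is_RInt (fun t => t * gauss_pdf t) a b ((- gauss_pdf b) - (- gauss_pdf a)).
Proof. apply (iR_der (fun t => - gauss_pdf t)). apply anti1. apply cont1. Qed.

Lemma iR2 a b : is_RInt (fun t => hnorm 2 t * gauss_pdf t) a b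
   (/ sqrt 2 * ((- b * gauss_pdf b) - (- a * gauss_pdf a)) + 0 * ((- b * gauss_pdf b) - (- a * gauss_pdf a))).
Proof.
  assert (H : is_RInt (fun t => (t * t - 1) * gauss_pdf t) a b ((- b * gauss_pdf b) - (- a * gauss_pdf a))).
  { apply (iR_der (fun t => - t * gauss_pdf t)). apply anti2. apply cont2. }
  eapply iR_ext. 2: exact (iR_lin _ _ a b _ _ (/ sqrt 2) 0 H H).
  intros x _. rewrite hn2. unfold Rdiv. ring.
Qed.

Lemma sqrt2_gt1 : 1 < sqrt 2.
Proof. rewrite <- sqrt_1. apply sqrt_lt_1_alt. lra. Qed.

Lemma int_w1 : improper_int (fun t => hnorm 1 t * gauss_pdf t) 0.
Proof.
  apply imp_of. intros eps He. destruct (tail_small (eps/2)) as [M [HM1 HM]]; [lra|].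
  exists M. intros a b Ha Hb. eexists. split.
  - eapply iR_ext. 2: apply iR1. intros x _. simpl. rewrite hn1. auto.
  - assert (A : M <= Rabs a) by (rewrite Rabs_left1 by lra; lra).
    assert (B : M <= Rabs b) by (rewrite Rabs_right by lra; lra).
    destruct (HM a A) as [A1 _]. destruct (HM b B) as [B1 _].
    assert (P1 := phi_pos a). assert (P2 := phi_pos b).
    apply Rabs_lt_between. lra.
Qed.

Lemma int_w2 : improper_int (fun t => hnorm 2 t * gauss_pdf t) 0.
Proof.
  apply imp_of. intros eps He. destruct (tail_small (eps/2)) as [M [HM1 HM]]; [lra|].
  exists M. intros a b Ha Hb. eexists. split.
  - apply iR2.
  - assert (A : M <= Rabs a) by (rewrite Rabs_left1 by lra; lra).
    assert (B : M <= Rabs b) by (rewrite Rabs_right by lra; lra).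
    destruct (HM a A) as [_ A1]. destruct (HM b B) as [_ B1].
    rewrite Rabs_left1 in A1 by lra. rewrite Rabs_right in B1 by lra.
    assert (P1 := phi_pos a). assert (P2 := phi_pos b).
    assert (S1 := sqrt2_gt1).
    assert (I1 : 0 < / sqrt 2 < 1).
    { split. apply Rinv_0_lt_compat; lra. rewrite <- Rinv_1. apply Rinv_lt_contravar; lra. }
    set (D := (- b * gauss_pdf b) - (- a * gauss_pdf a)).
    assert (HD : - eps < D < eps) by (unfold D; nra).
    apply Rabs_lt_between. nra.
Qed.

Definition a2 (c : R) : R := - (2 * c * gauss_pdf c) / sqrt 2.

Lemma trunc_imp (g : R -> R) c I : 0 < c -> is_RInt g (-c) c I ->
  improper_int (fun t => chi c t * g t) I.
Proof.
  intros Hc H. apply imp_of. intros eps He. exists (c + 1). intros a b Ha Hb.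
  exists I. split.
  - apply trunc; auto; lra.
  - rewrite Rminus_diag, Rabs_R0. auto.
Qed.

Lemma int_u0 c p : 0 < c -> is_RInt gauss_pdf (-c) c p ->
  improper_int (fun t => (chi c t * hnorm 0 t) * gauss_pdf t) p.
Proof.
  intros Hc H. eapply imp_ext. 2: apply (trunc_imp gauss_pdf c p Hc H).
  intro t. simpl. rewrite hn0. ring.
Qed.

Lemma int_u1 c : 0 < c -> improper_int (fun t => (chi c t * hnorm 1 t) * gauss_pdf t) 0.
Proof.
  intros Hc. eapply imp_ext. 2: apply (trunc_imp (fun t => t * gauss_pdf t) c 0 Hc).
  - intro t. simpl. rewrite hn1. ring.
  - eapply iR_val. apply iR1. rewrite phi_even. lra.
Qed.

Lemma int_u2 c : 0 < c -> improper_int (fun t => (chi c t * hnorm 2 t) * gauss_pdf t) (a2 c).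
Proof.
  intros Hc. eapply imp_ext. 2: apply (trunc_imp (fun t => hnorm 2 t * gauss_pdf t) c (a2 c) Hc).
  - intro t. simpl. ring.
  - eapply iR_val. apply iR2. rewrite phi_even. unfold a2. unfold Rdiv. match goal with |- ?x = ?y => change (@eq R x y) end. ring.
Qed.

Ltac rq := match goal with |- ?x = ?y => change (@eq R x y) end.

Definition gg (t : R) : R := exp (- (t * t)).
Definition GH : Prop := forall eps, 0 < eps -> exists M,
  forall x, M <= x -> Rabs (RInt gg 0 x - sqrt PI / 2) < eps.

Lemma gg_cont t : continuous gg t.
Proof. apply cont_of_ex. unfold gg. auto_derive. auto. Qed.

Lemma gg_sym x : RInt gg 0 (- x) = - RInt gg 0 x.
Proof.
  assert (H1 := iR_cont gg 0 x gg_cont).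
  assert (H2 : is_RInt (fun y => opp (gg (- y))) 0 (- x) (RInt gg 0 x)).
  { assert (H1' : is_RInt gg (- 0) (- - x) (RInt gg 0 x)) by (rewrite Ropp_0, Ropp_involutive; exact H1).
    exact (is_RInt_comp_opp gg 0 (- x) _ H1'). }
  assert (H3 : is_RInt (fun y => - gg y) 0 (- x) (RInt gg 0 x)).
  { eapply iR_ext. 2: exact H2. intros y _.
    transitivity (- gg (- y)). reflexivity. unfold gg. rewrite Rmult_opp_opp. reflexivity. }
  assert (H4 := iR_cont gg 0 (- x) gg_cont).
  assert (H5 : is_RInt (fun y => - gg y) 0 (- x) (-1 * RInt gg 0 (-x) + 0 * RInt gg 0 (-x))).
  { eapply iR_ext. 2: exact (iR_lin _ _ 0 (-x) _ _ (-1) 0 H4 H4). intros y _. match goal with |- ?x = ?y => change (@eq R x y) end. cbv beta. ring. }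
  apply iR_unique in H3. apply iR_unique in H5. 
  match goal with |- ?x = ?y => change (@eq R x y) end.
  lra.
Qed.

Lemma sqrt2_pos : 0 < sqrt 2.
Proof. apply sqrt_lt_R0. lra. Qed.
Lemma sqrtPI_pos : 0 < sqrt PI.
Proof. apply sqrt_lt_R0. apply PI_RGT_0. Qed.

Lemma gauss_iR a b : is_RInt gauss_pdf a b
   (/ sqrt PI * (RInt gg 0 (b / sqrt 2) - RInt gg 0 (a / sqrt 2)) + 0 * (RInt gg 0 (b / sqrt 2) - RInt gg 0 (a / sqrt 2))).
Proof.
  set (s := / sqrt 2).
  assert (Hs : 0 < s) by (apply Rinv_0_lt_compat, sqrt2_pos).
  assert (Ea : a / sqrt 2 = s * a + 0) by (unfold s, Rdiv; ring).
  assert (Eb : b / sqrt 2 = s * b + 0) by (unfold s, Rdiv; ring).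
  assert (Hc : is_RInt gg (s * a + 0) (s * b + 0) (RInt gg 0 (b / sqrt 2) - RInt gg 0 (a / sqrt 2))).
  { rewrite Ea, Eb.
    assert (I1 := iR_cont gg 0 (s * a + 0) gg_cont).
    assert (I2 := iR_cont gg (s * a + 0) (s * b + 0) gg_cont).
    assert (I3 := iR_unique _ _ _ _ (iR_chasles _ _ _ _ _ _ I1 I2)).
    eapply iR_val. exact I2. match goal with |- ?x = ?y => change (@eq R x y) end. lra. }
  assert (H := is_RInt_comp_lin gg s 0 a b _ Hc).
  eapply iR_ext. 2: exact (iR_lin _ _ a b _ _ (/ sqrt PI) 0 H H).
  intros y _. unfold scal; simpl. unfold mult; simpl. unfold gauss_pdf, gg.
  rewrite sqrt_mult by (generalize PI_RGT_0; lra).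
  replace (- ((s * y + 0) * (s * y + 0))) with (- y ^ 2 / 2).
  - unfold s. rq. field. split; [apply Rgt_not_eq, sqrtPI_pos | apply Rgt_not_eq, sqrt2_pos].
  - unfold s. replace ((/ sqrt 2 * y + 0) * (/ sqrt 2 * y + 0)) with (y * y / (sqrt 2 * sqrt 2)).
    + rewrite sqrt_sqrt by lra. rq. field.
    + rq. field. apply Rgt_not_eq, sqrt2_pos.
Qed.

Lemma int_w0 : GH -> improper_int (fun t => hnorm 0 t * gauss_pdf t) 1.
Proof.
  intro G. apply imp_of. intros eps He.
  assert (SP := sqrtPI_pos). assert (S2 := sqrt2_pos).
  set (e' := eps * sqrt PI / 2).
  assert (He' : 0 < e') by (unfold e'; nra).
  destruct (G e' He') as [M0 HM0].
  exists (Rmax 1 (M0 * sqrt 2)). intros a b Ha Hb.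
  assert (R1 := Rmax_l 1 (M0 * sqrt 2)). assert (R2 := Rmax_r 1 (M0 * sqrt 2)).
  eexists. split.
  - eapply iR_ext. 2: apply gauss_iR. intros x _. simpl. rewrite hn0. ring.
  - rewrite <- (Ropp_involutive (a / sqrt 2)), gg_sym.
    assert (Bb : M0 <= b / sqrt 2).
    { replace M0 with (M0 * sqrt 2 / sqrt 2) by (field; lra).
      unfold Rdiv. apply Rmult_le_compat_r. left; apply Rinv_0_lt_compat; lra. lra. }
    assert (Ba : M0 <= - (a / sqrt 2)).
    { replace M0 with (M0 * sqrt 2 / sqrt 2) by (field; lra).
      replace (- (a / sqrt 2)) with (- a / sqrt 2) by (field; lra).
      unfold Rdiv. apply Rmult_le_compat_r. left; apply Rinv_0_lt_compat; lra. lra. }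
    assert (X := HM0 _ Bb). assert (Y := HM0 _ Ba).
    set (P := RInt gg 0 (b / sqrt 2)) in *. set (Q := RInt gg 0 (- (a / sqrt 2))) in *.
    apply Rabs_lt_between in X. apply Rabs_lt_between in Y.
    replace (/ sqrt PI * (P - - Q) + 0 * (P - - Q) - 1) with
      (/ sqrt PI * ((P - sqrt PI / 2) + (Q - sqrt PI / 2))) by (field; lra).
    rewrite Rabs_mult. rewrite Rabs_right by (left; apply Rinv_0_lt_compat; lra).
    apply Rmult_lt_reg_l with (sqrt PI); [lra|].
    rewrite <- Rmult_assoc. rewrite Rinv_r by lra. rewrite Rmult_1_l.
    apply Rle_lt_trans with (Rabs (P - sqrt PI / 2) + Rabs (Q - sqrt PI / 2)). apply Rabs_triang.
    apply Rabs_lt_between in X. apply Rabs_lt_between in Y. unfold e' in X, Y. nra.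
Qed.

Lemma HS_prodf n S x : HS n S x = prodf n (fun i => hnorm (S i)) x.
Proof. induction n; simpl; auto. rewrite IHn. auto. Qed.

Lemma prodchi n c x : prodf n (fun _ => chi c) x = if in_cube n c x then 1 else 0.
Proof.
  induction n; simpl; auto. rewrite IHn. unfold chi.
  destruct (in_cube n c x); destruct (Rle_dec (Rabs (x n)) c); simpl; ring.
Qed.

Lemma prodf_mult n u w x : prodf n (fun i t => u i t * w i t) x = prodf n u x * prodf n w x.
Proof. induction n; simpl; [ring | rewrite IHn; ring]. Qed.

Lemma cube_eq n c S x : cubeK n c x * HS n S x =
  2 * prodf n (fun i t => chi c t * hnorm (S i) t) x + (-1) * prodf n (fun i => hnorm (S i)) x.
Proof.
  rewrite HS_prodf. rewrite (prodf_mult n (fun _ => chi c) (fun i => hnorm (S i))).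
  rewrite prodchi. unfold cubeK. destruct (in_cube n c x); ring.
Qed.

Definition coef (n : nat) (c p : R) (S : nat -> nat) : R :=
  2 * prodr n (fun i => Ec p (a2 c) (S i)) - prodr n (fun i => E0 (S i)).

Lemma gexp_main (G : GH) n c p S : 0 < c -> is_RInt gauss_pdf (-c) c p ->
  (forall i, (i < n)%nat -> (S i <= 2)%nat) ->
  gexp n (fun x => cubeK n c x * HS n S x) (coef n c p S).
Proof.
  intros Hc Hp HS2.
  eapply gexp_ext. intro x. symmetry. apply cube_eq.
  unfold coef. replace (2 * prodr n (fun i : nat => Ec p (a2 c) (S i)) - prodr n (fun i : nat => E0 (S i)))
    with (2 * prodr n (fun i : nat => Ec p (a2 c) (S i)) + (-1) * prodr n (fun i : nat => E0 (S i))) by ring.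
  apply gexp_prod. intros i Hi. specialize (HS2 i Hi).
  destruct (S i) as [|[|[|k]]]; simpl.
  - split. apply int_u0; auto. apply int_w0; auto.
  - split. apply int_u1; auto. apply int_w1.
  - split. apply int_u2; auto. apply int_w2.
  - lia.
Qed.

Lemma exp_le_m x y : x <= y -> exp x <= exp y.
Proof. intro H. destruct (Rle_lt_or_eq_dec x y H) as [h|h]; [left; apply exp_increasing; auto | subst; lra]. Qed.

Lemma ln_le_m x y : 0 < x -> x <= y -> ln x <= ln y.
Proof. intros H1 H2. destruct (Rle_lt_or_eq_dec x y H2) as [h|h]; [left; apply ln_increasing; auto | subst; lra]. Qed.

Lemma ln2_bounds : / 2 < ln 2 < 1.
Proof.
  split. apply ln_lt_2.
  rewrite <- (ln_exp 1). apply ln_increasing. lra.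
  assert (H := exp_ineq1 1). lra.
Qed.

Lemma tot (G : GH) : improper_int gauss_pdf 1.
Proof. eapply imp_ext. 2: apply (int_w0 G). intro t. simpl. rewrite hn0. ring. Qed.

Lemma lim_le (G : GH) L : (exists M0, forall a b, a <= -M0 -> M0 <= b -> L <= RInt gauss_pdf a b) -> L <= 1.
Proof.
  intros [M0 H]. destruct (Rle_or_lt L 1) as [h|h]; auto. exfalso.
  destruct (imp_to _ _ (tot G) (L - 1)) as [M [HM0 HM]]; [lra|].
  set (K := Rmax M M0). assert (K1 := Rmax_l M M0). assert (K2 := Rmax_r M M0).
  destruct (HM (-K) K) as [_ B]; [unfold K; lra | unfold K; lra |].
  assert (C := H (-K) K ltac:(unfold K; lra) ltac:(unfold K; lra)).
  apply Rabs_lt_between in B. lra.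
Qed.

Lemma lim_ge (G : GH) U : (exists M0, forall a b, a <= -M0 -> M0 <= b -> RInt gauss_pdf a b <= U) -> 1 <= U.
Proof.
  intros [M0 H]. destruct (Rle_or_lt 1 U) as [h|h]; auto. exfalso.
  destruct (imp_to _ _ (tot G) (1 - U)) as [M [HM0 HM]]; [lra|].
  set (K := Rmax M M0). assert (K1 := Rmax_l M M0). assert (K2 := Rmax_r M M0).
  destruct (HM (-K) K) as [_ B]; [unfold K; lra | unfold K; lra |].
  assert (C := H (-K) K ltac:(unfold K; lra) ltac:(unfold K; lra)).
  apply Rabs_lt_between in B. lra.
Qed.

Lemma phi_mono t u : t * t <= u * u -> gauss_pdf u <= gauss_pdf t.
Proof.
  intro H. unfold gauss_pdf. unfold Rdiv. apply Rmult_le_compat_r.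
  left; apply Rinv_0_lt_compat, sq2pi_pos. apply exp_le_m. simpl. nra.
Qed.

Lemma phi_cst (a b k : R) : is_RInt (fun _ => k) a b ((b - a) * k).
Proof. apply iR_const. Qed.

Lemma pieces a b c p : is_RInt gauss_pdf (-c) c p ->
  forall m1 m2, a <= m1 -> m1 <= -c -> c <= m2 -> m2 <= b ->
  RInt gauss_pdf a b = RInt gauss_pdf a m1 + RInt gauss_pdf m1 (-c) + p + RInt gauss_pdf c m2 + RInt gauss_pdf m2 b.
Proof.
  intros Hp m1 m2 H1 H2 H3 H4.
  assert (C := fun u v => iR_cont gauss_pdf u v phi_cont).
  assert (X := iR_chasles _ _ _ _ _ _ (iR_chasles _ _ _ _ _ _ (iR_chasles _ _ _ _ _ _ (iR_chasles _ _ _ _ _ _ (C a m1) (C m1 (-c))) Hp) (C c m2)) (C m2 b)).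
  apply iR_unique in X. exact X.
Qed.

Lemma nonneg_int u v : u <= v -> 0 <= RInt gauss_pdf u v.
Proof.
  intro H. replace 0 with ((v - u) * 0) by ring.
  apply (iR_le (fun _ => 0) gauss_pdf u v); auto. apply iR_const. apply iR_cont, phi_cont.
  intros; left; apply phi_pos.
Qed.

Lemma RInt_pt u : RInt gauss_pdf u u = 0.
Proof. replace 0 with ((u - u) * 0) by ring. apply iR_unique.
  eapply iR_ext. 2: apply iR_const. intros x Hx. rewrite Rmin_left, Rmax_left in Hx; lra. Qed.

Lemma lower_tail (G : GH) c p : 0 < c -> is_RInt gauss_pdf (-c) c p ->
  p + 2 * (/ (c + 1)) * gauss_pdf (c + / (c + 1)) <= 1.
Proof.
  intros Hc Hp. set (d := / (c + 1)).
  assert (Hd : 0 < d) by (unfold d; apply Rinv_0_lt_compat; lra).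
  apply (lim_le G). exists (c + d). intros a b Ha Hb.
  rewrite (pieces a b c p Hp (-(c+d)) (c+d)) by lra.
  assert (N1 := nonneg_int a (-(c+d)) ltac:(lra)). assert (N2 := nonneg_int (c+d) b ltac:(lra)).
  assert (L1 : d * gauss_pdf (c + d) <= RInt gauss_pdf (- (c + d)) (- c)).
  { replace (d * gauss_pdf (c + d)) with ((- c - - (c + d)) * gauss_pdf (c + d)) by ring.
    apply (iR_le (fun _ => gauss_pdf (c + d)) gauss_pdf (-(c+d)) (-c)). lra. apply iR_const.
    apply iR_cont, phi_cont. intros x Hx. apply phi_mono. nra. }
  assert (L2 : d * gauss_pdf (c + d) <= RInt gauss_pdf c (c + d)).
  { replace (d * gauss_pdf (c + d)) with ((c + d - c) * gauss_pdf (c + d)) by ring.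
    apply (iR_le (fun _ => gauss_pdf (c + d)) gauss_pdf c (c + d)). lra. apply iR_const.
    apply iR_cont, phi_cont. intros x Hx. apply phi_mono. nra. }
  lra.
Qed.

Lemma phi_shift c : 0 < c -> gauss_pdf c * exp (- (3/2)) <= gauss_pdf (c + / (c + 1)).
Proof.
  intro Hc. set (d := / (c + 1)).
  assert (Hd : d * (c + 1) = 1) by (unfold d; field; lra).
  assert (Hd0 : 0 < d) by (unfold d; apply Rinv_0_lt_compat; lra).
  unfold gauss_pdf. unfold Rdiv. rewrite Rmult_assoc, (Rmult_comm (/ _)), <- Rmult_assoc.
  apply Rmult_le_compat_r. left; apply Rinv_0_lt_compat, sq2pi_pos.
  rewrite <- exp_plus. apply exp_le_m. simpl. nra.
Qed.

Lemma upper_tail (G : GH) c p : 0 < c -> is_RInt gauss_pdf (-c) c p ->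
  1 <= p + 2 * (gauss_pdf c / c).
Proof.
  intros Hc Hp. apply (lim_ge G). exists c. intros a b Ha Hb.
  rewrite (pieces a b c p Hp (-c) c) by lra. rewrite !RInt_pt.
  assert (Pa := phi_pos a). assert (Pb := phi_pos b).
  assert (R1 : RInt gauss_pdf c b <= / c * ((- gauss_pdf b) - (- gauss_pdf c)) + 0 * ((- gauss_pdf b) - (- gauss_pdf c))).
  { apply (iR_le gauss_pdf (fun t => / c * (t * gauss_pdf t) + 0 * (t * gauss_pdf t)) c b). lra.
    apply iR_cont, phi_cont. apply iR_lin; apply iR1.
    intros x Hx. assert (P := phi_pos x).
    assert (/ c * x >= 1). { apply Rle_ge. replace 1 with (/ c * c) by (field; lra).
      apply Rmult_le_compat_l. left; apply Rinv_0_lt_compat; lra. lra. }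
    nra. }
  assert (R2 : RInt gauss_pdf a (-c) <= (- / c) * ((- gauss_pdf (-c)) - (- gauss_pdf a)) + 0 * ((- gauss_pdf (-c)) - (- gauss_pdf a))).
  { apply (iR_le gauss_pdf (fun t => (- / c) * (t * gauss_pdf t) + 0 * (t * gauss_pdf t)) a (-c)). lra.
    apply iR_cont, phi_cont. apply iR_lin; apply iR1.
    intros x Hx. assert (P := phi_pos x).
    assert (- / c * x >= 1). { apply Rle_ge. replace 1 with (/ c * c) by (field; lra).
      replace (- / c * x) with (/ c * (- x)) by ring.
      apply Rmult_le_compat_l. left; apply Rinv_0_lt_compat; lra. lra. }
    nra. }
  rewrite phi_even in R2.
  assert (Ic : 0 < / c) by (apply Rinv_0_lt_compat; lra).
  unfold Rdiv. nra.
Qed.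

Lemma p_facts n : (2 <= n)%nat ->
  0 < Rpower (1/2) (1 / INR n) /\ Rpower (1/2) (1 / INR n) <= 1 /\
  Rpower (1/2) (1 / INR n) ^ n = 1/2 /\
  1 - Rpower (1/2) (1 / INR n) <= 1 / INR n /\
  1 / (4 * INR n) <= 1 - Rpower (1/2) (1 / INR n).
Proof.
  intro Hn. assert (HN : 2 <= INR n) by (replace 2 with (INR 2) by (simpl; ring); apply le_INR; auto).
  set (y := ln 2 / INR n).
  assert (L := ln2_bounds).
  assert (Ep : Rpower (1/2) (1 / INR n) = exp (- y)).
  { unfold Rpower, y. f_equal. replace (1/2) with (/ 2) by field. rewrite ln_Rinv by lra. field. lra. }
  assert (Hy1 : y <= 1 / INR n) by (unfold y, Rdiv; apply Rmult_le_compat_r; [left; apply Rinv_0_lt_compat; lra | lra]).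
  assert (Hy2 : / 2 * (1 / INR n) <= y).
  { unfold y, Rdiv. rewrite Rmult_1_l. apply Rmult_le_compat_r; [left; apply Rinv_0_lt_compat; lra | lra]. }
  assert (Hin : 0 < 1 / INR n <= / 2).
  { split. apply Rdiv_lt_0_compat; lra. unfold Rdiv. rewrite Rmult_1_l. apply Rinv_le_contravar; lra. }
  rewrite Ep. split; [apply exp_pos|]. split.
  { rewrite <- exp_0. apply exp_le_m. lra. }
  split.
  { rewrite <- Ep. rewrite <- Rpower_pow by (rewrite Ep; apply exp_pos).
    rewrite Rpower_mult. replace (1 / INR n * INR n) with 1 by (field; lra). apply Rpower_1. lra. }
  split.
  { assert (H := exp_ineq1_le (- y)). lra. }
  assert (H := exp_ineq1_le y). assert (E : exp (- y) * exp y = 1) by (rewrite <- exp_plus; replace (-y + y) with 0 by ring; apply exp_0).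
  assert (Pe := exp_pos (-y)).
  assert (exp (- y) * (1 + y) <= 1) by nra.
  assert (1 / (4 * INR n) = / 2 * (/ 2 * (1 / INR n))) by (field; lra).
  nra.
Qed.

Lemma exp32 : exp (3/2) <= 9.
Proof.
  apply Rle_trans with (exp 2). apply exp_le_m. lra.
  replace 2 with (1 + 1) by ring. rewrite exp_plus. assert (H := exp_le_3). assert (P := exp_pos 1). nra.
Qed.

Lemma key (G : GH) n c : (2 <= n)%nat -> 0 < c -> is_RInt gauss_pdf (-c) c (Rpower (1/2) (1 / INR n)) ->
  INR n * c * gauss_pdf c <= 65 * ln (INR n).
Proof.
  intros Hn Hc Hp. set (p := Rpower (1/2) (1 / INR n)) in *.
  destruct (p_facts n Hn) as [P0 [P1 [P2 [P3 P4]]]]. fold p in P0, P1, P2, P3, P4.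
  assert (HN : 2 <= INR n) by (replace 2 with (INR 2) by (simpl; ring); apply le_INR; auto).
  assert (L := ln2_bounds).
  assert (Lnn : ln 2 <= ln (INR n)) by (apply ln_le_m; lra).
  assert (LT := lower_tail G c p Hc Hp). assert (SH := phi_shift c Hc).
  assert (UT := upper_tail G c p Hc Hp).
  set (f := gauss_pdf c) in *. assert (Pf : 0 < f) by apply phi_pos.
  set (d := / (c + 1)) in *. assert (Hd : d * (c + 1) = 1) by (unfold d; field; lra).
  assert (Hd0 : 0 < d) by (unfold d; apply Rinv_0_lt_compat; lra).
  set (E := exp (- (3/2))) in *.
  assert (HE : E * exp (3/2) = 1) by (unfold E; rewrite <- exp_plus; replace (- (3/2) + 3/2) with 0 by ring; apply exp_0).
  assert (E9 := exp32). assert (PE : 0 < E) by (apply exp_pos).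
  assert (E19 : / 9 <= E) by nra.
  assert (A1 : 2 * d * f * E <= 1 / INR n) by nra.
  assert (A2 : INR n * f <= 9 / 2 * (c + 1)).
  { assert (INR n * (2 * d * f * E) <= 1).
    { apply Rmult_le_compat_l with (r := INR n) in A1; [|lra].
      replace (INR n * (1 / INR n)) with 1 in A1 by (field; lra). lra. }
    assert (B1 : INR n * f * 2 * E * (d * (c + 1)) <= c + 1).
    { replace (INR n * f * 2 * E * (d * (c + 1))) with ((INR n * (2 * d * f * E)) * (c + 1)) by ring.
      rewrite <- (Rmult_1_l (c + 1)) at 2. apply Rmult_le_compat_r; lra. }
    rewrite Hd, Rmult_1_r in B1.
    assert (0 <= INR n * f) by nra.
    nra. }
  assert (A3 : c <= 8 * (INR n * f)).
  { assert (H : 1 / (4 * INR n) <= 2 * (f / c)) by lra.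
    assert (H1 := Rmult_le_compat_r (4 * INR n * c) _ _ ltac:(nra) H).
    replace (1 / (4 * INR n) * (4 * INR n * c)) with c in H1 by (field; lra).
    replace (2 * (f / c) * (4 * INR n * c)) with (8 * (INR n * f)) in H1 by (field; lra).
    exact H1. }
  assert (A4 : c * c <= 8 * ln (INR n)).
  { destruct (Rle_or_lt c 1) as [h|h]; [nra|].
    assert (F1 : / (8 * INR n) < f).
    { assert (1 < 8 * (INR n * f)) by lra.
      apply Rmult_lt_reg_l with (8 * INR n). lra. rewrite Rinv_r by lra. lra. }
    assert (F2 : f <= exp (- c ^ 2 / 2)).
    { unfold f, gauss_pdf. unfold Rdiv. rewrite <- (Rmult_1_r (exp _)) at 2.
      apply Rmult_le_compat_l. left; apply exp_pos. rewrite <- Rinv_1. apply Rinv_le_contravar. lra.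
      apply sqrt2pi_ge1. }
    assert (F3 : ln (/ (8 * INR n)) < - c ^ 2 / 2).
    { rewrite <- (ln_exp (- c ^ 2 / 2)). apply ln_increasing. apply Rinv_0_lt_compat; lra. lra. }
    rewrite ln_Rinv in F3 by lra. rewrite ln_mult in F3 by lra.
    assert (L8 : ln 8 = 3 * ln 2).
    { replace 8 with (2 ^ 3) by ring. rewrite ln_pow by lra. simpl. ring. }
    simpl in F3. lra. }
  assert (A5 : INR n * c * f <= 9 / 2 * (c + 1) * c) by nra.
  nra.
Qed.

Lemma sum_ge_term (f : nat -> R) n i : (forall j, 0 <= f j) -> (i <= n)%nat -> f i <= sum_f_R0 f n.
Proof.
  intros Hf. induction n; intros Hi.
  - replace i with 0%nat by lia. simpl. lra.
  - simpl. destruct (Nat.eq_dec i (S n)) as [->|h].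
    + assert (0 <= sum_f_R0 f n) by (apply cond_pos_sum; auto). lra.
    + assert (f i <= sum_f_R0 f n) by (apply IHn; lia). specialize (Hf (S n)). lra.
Qed.

Lemma pow_le1 x k : 0 <= x <= 1 -> x ^ k <= 1.
Proof. intro H. induction k; simpl; [lra|]. assert (0 <= x ^ k) by (apply pow_le; lra). nra. Qed.

Lemma main_thm (G : GH) :
  exists C : R, 0 < C /\
  forall (n : nat) (c : R), (2 <= n)%nat ->
    0 < c -> prob_abs_le c (Rpower (1 / 2) (1 / INR n)) ->
    exists coef : (nat -> nat) -> R,
      (forall S : nat -> nat,
         (forall i, (n <= i)%nat -> S i = O) ->
         (sum_f_R0 (fun i => INR (S i)) n <= 2) ->
         gexp n (fun x => cubeK n c x * HS n S x) (coef S)) /\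
      sum_multi n 2 (fun S => (coef S) ^ 2) <= C * (ln (INR n)) ^ 2 / INR n.
Proof.
  exists (8 * 65 ^ 2). split; [lra|].
  intros n c Hn Hc [pr Hpr].
  set (p := Rpower (1 / 2) (1 / INR n)) in *.
  assert (Hp : is_RInt gauss_pdf (-c) c p).
  { rewrite <- Hpr, <- RInt_Reals. exact (iR_cont gauss_pdf (-c) c phi_cont). }
  exists (coef n c p). split.
  - intros S HS0 Hsum. apply gexp_main; auto. intros i Hi.
    assert (H := sum_ge_term (fun i => INR (S i)) n i (fun j => pos_INR (S j)) ltac:(lia)).
    cbv beta in H. assert (INR (S i) <= INR 2) by (simpl; lra).
    apply INR_le. auto.
  - destruct (p_facts n Hn) as [P0 [P1 [P2 _]]]. fold p in P0, P1, P2.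
    unfold coef. rewrite sum_final by exact P2.
    assert (K := key G n c Hn Hc Hp).
    assert (HN : 2 <= INR n) by (replace 2 with (INR 2) by (simpl; ring); apply le_INR; auto).
    assert (Pw : (p ^ 2) ^ Init.Nat.pred n <= 1) by (apply pow_le1; split; nra).
    assert (Pw0 : 0 <= (p ^ 2) ^ Init.Nat.pred n) by (apply pow_le; nra).
    assert (Ea : a2 c ^ 2 = 2 * (c * gauss_pdf c) ^ 2).
    { unfold a2. unfold Rdiv. rewrite Rpow_mult_distr. rewrite <- Rinv_pow by (apply Rgt_not_eq, sqrt2_pos).
      replace (sqrt 2 ^ 2) with 2 by (simpl; rewrite Rmult_1_r, sqrt_sqrt; lra). field. }
    rewrite Ea.
    set (f := gauss_pdf c) in *. assert (Pf : 0 < f) by apply phi_pos.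
    assert (Q0 : 0 <= INR n * c * f) by (apply Rmult_le_pos; [nra|lra]).
    assert (Q1 : (INR n * c * f) ^ 2 <= (65 * ln (INR n)) ^ 2) by (apply pow_incr; lra).
    apply Rle_trans with (8 * INR n * (c * f) ^ 2).
    + assert (0 <= 8 * INR n * (c * f) ^ 2) by (apply Rmult_le_pos; [lra | apply pow2_ge_0]). nra.
    + replace (8 * INR n * (c * f) ^ 2) with (8 * (INR n * c * f) ^ 2 / INR n) by (field; lra).
      unfold Rdiv. apply Rmult_le_compat_r. left; apply Rinv_0_lt_compat; lra.
      replace (8 * 65 ^ 2 * ln (INR n) ^ 2) with (8 * (65 * ln (INR n)) ^ 2) by ring. lra.
Qed.

Lemma dF : forall y, derivable_pt_lim (fun z => RInt gg 0 z) y (gg y).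
Proof.
  intro y. apply is_derive_Reals. apply (is_derive_RInt gg (RInt gg 0) 0 y).
  - exists (mkposreal 1 Rlt_0_1). intros z _. apply (@RInt_correct R_CompleteNormedModule).
    apply ex_RInt_continuous. intros; apply gg_cont.
  - apply gg_cont.
Qed.
Lemma RInt_gg0 : RInt gg 0 0 = 0.
Proof. exact (@RInt_point R_CompleteNormedModule 0 gg). Qed.

Module B.
From mathcomp Require Import all_boot all_order all_algebra all_classical all_reals all_analysis Rstruct Rstruct_topology.
Import Order.TTheory GRing.Theory Num.Theory.
Import numFieldNormedType.Exports.
Local Open Scope ring_scope.
Local Open Scope classical_set_scope.

Lemma RcosE (x : R) : Rtrigo_def.cos x = cos x.
Proof.
apply/esym; rewrite /Rtrigo_def.cos; case: exist_cos => y.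
rewrite /cos_in /infinite_sum => cos_ub.
have h := @cvg_cos_coeff' R x.
rewrite -(cvg_lim (@Rhausdorff R) h).
apply: (@cvg_lim R^o) => //.
apply/cvgrPdist_lt => /= e /RltP /cos_ub[N Nub].
near=> n.
have nN : (n.-1 >= N)%coq_nat.
  apply/ssrnat.leP; rewrite -ltnS prednK; last by near: n; exact: nbhs_infty_gt.
  by near: n; exact: nbhs_infty_gt.
move: Nub => /(_ _ nN) /[!RdistE] /RltP /=.
rewrite distrC sum_f_R0E prednK; last by near: n; exact: nbhs_infty_gt.
congr (`| _ - _ | < e).
apply: eq_bigr=> k _.
rewrite /cos_n /cos_coeff' RdivE RpowE INRE factE RpowE /Rsqr RmultE.
have -> : ((2 * k)%coq_nat) = k.*2 by rewrite -mul2n.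
have -> : (x * x)%coqR = x ^+ 2 by rewrite expr2.
rewrite -exprnP -exprM mul2n.
have -> : (-1)%coqR = - 1 :> R by []. by rewrite mulrAC.
Unshelve. all: by end_near. Qed.

Lemma RpiE : PI = pi :> R.
Proof.
have cb : cos (PI / 2)%coqR = 0.
  by rewrite -RcosE cos_PI2.
have Pp : (0 < PI / 2)%coqR by apply: PI2_RGT_0.
have pp : 0 < pi / 2 :> R by rewrite divr_gt0 // pi_gt0.
have [h|h|h] := ltgtP (pi / 2) (PI / 2)%coqR.
- have : (0 < Rtrigo_def.cos (pi / 2))%coqR.
    apply: cos_gt_0; last exact/RltP.
    apply/RltP; rewrite RoppE (lt_trans _ pp) // oppr_lt0; exact/RltP.
  by rewrite RcosE cos_pihalf => /Rlt_irrefl.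
- have : 0 < cos (PI / 2)%coqR.
    apply: cos_gt0_pihalf; rewrite h andbT (lt_trans _ (_ : 0 < _)) //.
      by rewrite oppr_lt0.
    exact/RltP.
  by rewrite cb ltxx.
- have t2 : (2%coqR : R) = 2 by rewrite IZRposE INRE.
  move: h; rewrite RdivE t2 => /(congr1 (fun t => t * 2)).
  by rewrite !mulfVK.
Qed.

Lemma bridge (f : R^o -> R^o) (x l : R) : derivable_pt_lim f x l ->
  derivable f x 1 /\ f^`() x = l.
Proof.
move=> H.
have C : (fun h : R => h^-1 *: ((f \o shift x) (h *: (1:R^o)) - f x)) @ (0:R)^' --> (l:R^o).
  apply/cvgrPdist_lt => e e0.
  have [d Hd] := H e (RltP e0).
  have d0 : 0 < (d:R) by apply/RltP; exact: cond_pos.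
  near=> h.
  have [hb /eqP hn0] : (ball (0:R) d `\ 0) h by near: h; exact: dnbhs_ball.
  have hn' : h <> 0 by apply/eqP.
  have hd : (Rabs h < d)%coqR by apply/RltP; move: hb; rewrite /ball /= sub0r normrN RabsE.
  move: (Hd h hn' hd) => /RltP; rewrite RabsE distrC /=.
  have -> : (h%:A : R^o) = h by rewrite -[RHS]mulr1.
  rewrite [h + x]addrC.
  have -> : forall u : R^o, h^-1 *: u = h^-1 * u by [].
  by rewrite !RminusE RdivE mulrC.
split; first by apply/cvgP: C.
by rewrite derive1E /derive; apply: cvg_lim.
Unshelve. all: by end_near. Qed.

Lemma gauss_ftc (x : R) : 0 < x ->
  gauss_integral_proof.integral0_gauss x = RInt gg 0 x.
Proof.
move=> x0.
have cF : forall y, {for y, continuous (fun z => RInt gg 0 z)}.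
  move=> y; apply/continuity_pt_cvg; apply: derivable_continuous_pt.
  exists (gg y); exact: dF.
have h1 : {within `[0, x], continuous gauss_fun}.
  by apply: continuous_subspaceT => ?; exact: continuous_gauss_fun.
have E := @continuous_FTC2 R gauss_fun (fun z => RInt gg 0 z) 0 x x0 h1.
rewrite /gauss_integral_proof.integral0_gauss /Rintegral E.
- by rewrite RInt_gg0 /= subr0.
- split.
  + move=> y _; have [D _] := @bridge _ _ _ (dF y). exact D.
  + exact: cvg_at_right_filter (cF 0).
  + exact: cvg_at_left_filter (cF x).
- move=> y _; have [_ ->] := @bridge _ _ _ (dF y).
  by rewrite /gg /gauss_fun RexpE RoppE RmultE expr2.
Qed.

Lemma cvg_Ig : @gauss_integral_proof.integral0_gauss R x @[x --> +oo] --> Num.sqrt (pi : R) / 2.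
Proof.
  have : Num.sqrt (@gauss_integral_proof.integral0_gauss R x ^+ 2) @[x --> +oo]
      --> Num.sqrt ((pi : R) / 4).
    apply: continuous_cvg => //;
      [exact: sqrt_continuous|exact: (@gauss_integral_proof.cvg_integral0_gauss_sqr R)].
  rewrite sqrtrM ?pi_ge0// sqrtrV// (_ : 4 = 2 ^+ 2); last first.
    by rewrite expr2 -natrM.
  rewrite sqrtr_sqr ger0_norm//.
  rewrite (_ : (fun _ => Num.sqrt _) = gauss_integral_proof.integral0_gauss)//.
  apply/funext => r; rewrite sqrtr_sqr// ger0_norm//.
  exact: gauss_integral_proof.integral0_gauss_ge0.
Qed.

Lemma gauss_half : forall eps, (0 < eps)%coqR -> exists M,
  forall x, (M <= x)%coqR -> (Rabs (RInt gg 0 x - sqrt PI / 2) < eps)%coqR.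
Proof.
move=> e /RltP e0.
have := cvg_Ig; move/cvgrPdist_lt => /(_ e e0) [M [Mr HM]].
exists (Num.max (M + 1) 1) => x /RleP.
rewrite ge_max => /andP[Mx x1].
have x0 : 0 < x by apply: lt_le_trans x1.
have Mx' : M < x by apply: lt_le_trans Mx; rewrite ltrDl.
have := HM x Mx'.
rewrite gauss_ftc // RabsE distrC RsqrtE RpiE RminusE RdivE.
have t2 : (2%coqR : R) = 2 by rewrite IZRposE INRE.
by rewrite t2 => /RltP.
Qed.
End B.

Theorem fact5p9 :
  exists C : R, 0 < C /\
  forall (n : nat) (c : R), (2 <= n)%nat ->
    0 < c -> prob_abs_le c (Rpower (1 / 2) (1 / INR n)) ->
    exists coef : (nat -> nat) -> R,
      (forall S : nat -> nat,
         (forall i, (n <= i)%nat -> S i = O) ->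
         (sum_f_R0 (fun i => INR (S i)) n <= 2) ->
         gexp n (fun x => cubeK n c x * HS n S x) (coef S)) /\
      sum_multi n 2 (fun S => (coef S) ^ 2) <= C * (ln (INR n)) ^ 2 / INR n.
Proof.
  exact (main_thm B.gauss_half).
Qed.
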